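(* Let $d\ge1$, $L>0$, $N\ge1$ an integer, and let $p:[0,L]^d\to[0,\infty)$ be a probability density function that is Lipschitz continuous (w.r.t. the Euclidean norm) with constant $\ell_p$ and satisfies $p(x)>0$ for some $x\in\mathbb{X}_N^d$. Let $f:[0,L]^d\to\mathbb{R}$ be bounded and Lipschitz continuous with constant $\ell_f$, and write $\|f\|_{\mathsf{L}^\infty}=\sup_x|f(x)|$. Then $$|\mu(p)-\mu(\bar p_N)|\le 2\|f\|_{\mathsf{L}^\infty}\frac{\ell_p\sqrt d\,L^{d+1}}{N}+\ell_f\sqrt d\,\frac LN,$$ $$|\sigma^2(p)-\sigma^2(\bar p_N)|\le 6\|f\|_{\mathsf{L}^\infty}^2\frac{\ell_p\sqrt d\,L^{d+1}}{N}+4\|f\|_{\mathsf{L}^\infty}\ell_f\sqrt d\,\frac LN.$$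
   Context: $\mathbb{X}_N=\frac{L}{N}\{0,1,\dots,N-1\}$ and $\mathbb{X}_N^d\subset[0,L]^d$ is the uniform grid. The discretization $\bar p_N:\mathbb{X}_N^d\to[0,1]$ of $p$ is $\bar p_N(x)=p(x)/S$ with $S=\sum_{x\in\mathbb{X}_N^d}p(x)$. For a distribution $Q$ (a density on $[0,L]^d$ or a probability mass function on $\mathbb{X}_N^d$), $\mu(Q)=\mathbb{E}_{x\sim Q}[f(x)]$, $m_2(Q)=\mathbb{E}_{x\sim Q}[f(x)^2]$ and $\sigma^2(Q)=m_2(Q)-\mu(Q)^2$. *)

(* Defs.v *)
From mathcomp Require Import all_boot all_order all_algebra.
From mathcomp Require Import all_classical all_reals all_analysis.
Unset Printing Implicit Defensive.
Import Order.TTheory GRing.Theory Num.Theory.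
Local Open Scope classical_set_scope.
Local Open Scope ring_scope.

Section Defs.
Context {R : realType}.

Definition cube (d : nat) (L : R) : set 'rV[R]_d :=
  [set x | forall i, 0 <= x ord0 i <= L].

Definition eucl (d : nat) (x : 'rV[R]_d) : R :=
  Num.sqrt (\sum_(i < d) (x ord0 i) ^+ 2).

Definition lipschitz_cube (d : nat) (L : R) (g : 'rV[R]_d -> R) (l : R) : Prop :=
  forall x y, cube d L x -> cube d L y -> `|g x - g y| <= l * eucl d (x - y).

(* Integral over [0,L]^d w.r.t. d-dimensional Lebesgue measure, written as
   the iterated Lebesgue integral over [0,L] in each coordinate. *)
Fixpoint cube_int (L : R) (d : nat) : ('rV[R]_d -> R) -> R :=
  match d with
  | 0 => fun F => F 0
  | d'.+1 => fun F =>
      Rintegral lebesgue_measure `[0, L]%classic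
        (fun t : R => cube_int L d' (fun v : 'rV[R]_d' =>
                        F (row_mx (const_mx t : 'rV[R]_1) v)))
  end.

Definition is_density (d : nat) (L : R) (p : 'rV[R]_d -> R) : Prop :=
  (forall x, cube d L x -> 0 <= p x) /\ cube_int L d p = 1.

Definition grid_pt (d N : nat) (L : R) (k : {ffun 'I_d -> 'I_N}) : 'rV[R]_d :=
  \row_i (L / N%:R * (k i)%:R).

Definition gridsum (d N : nat) (L : R) (p : 'rV[R]_d -> R) : R :=
  \sum_(k : {ffun 'I_d -> 'I_N}) p (grid_pt d N L k).

Definition pbar (d N : nat) (L : R) (p : 'rV[R]_d -> R) (k : {ffun 'I_d -> 'I_N}) : R :=
  p (grid_pt d N L k) / gridsum d N L p.

Definition mu_c (d : nat) (L : R) (f p : 'rV[R]_d -> R) : R :=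
  cube_int L d (fun x => f x * p x).
Definition m2_c (d : nat) (L : R) (f p : 'rV[R]_d -> R) : R :=
  cube_int L d (fun x => f x ^+ 2 * p x).
Definition var_c (d : nat) (L : R) (f p : 'rV[R]_d -> R) : R :=
  m2_c d L f p - mu_c d L f p ^+ 2.

Definition mu_d (d N : nat) (L : R) (f p : 'rV[R]_d -> R) : R :=
  \sum_(k : {ffun 'I_d -> 'I_N}) f (grid_pt d N L k) * pbar d N L p k.
Definition m2_d (d N : nat) (L : R) (f p : 'rV[R]_d -> R) : R :=
  \sum_(k : {ffun 'I_d -> 'I_N}) f (grid_pt d N L k) ^+ 2 * pbar d N L p k.
Definition var_d (d N : nat) (L : R) (f p : 'rV[R]_d -> R) : R :=
  m2_d d N L f p - mu_d d N L f p ^+ 2.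

Definition supnorm (d : nat) (L : R) (f : 'rV[R]_d -> R) : R :=
  sup [set `|f x| | x in cube d L].

End Defs.

(* Main.v *)
Require Import Defs.
From mathcomp Require Import all_boot all_order all_algebra.
From mathcomp Require Import all_classical all_reals all_analysis.
From mathcomp Require Import ring lra.
Import Order.TTheory GRing.Theory Num.Theory.
Import numFieldNormedType.Exports.
Local Open Scope classical_set_scope.
Local Open Scope ring_scope.

Definition lip1 {R : realType} (a b : R) (g : R -> R) (l : R) :=
  forall s t, a <= s <= b -> a <= t <= b -> `|g s - g t| <= l * `|s - t|.

Lemma lip_cont {R : realType} (g : R -> R) (l : R) :
  (forall s t, `|g s - g t| <= l * `|s - t|) -> continuous g.
Proof.
move=> H x; apply/cvgrPdist_le => e e0.
apply/nbhs_ballP; exists (e / (`|l| + 1)) => /=.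
  by rewrite divr_gt0 // ltr_pwDr.
move=> y; rewrite /ball /= => hy.
apply: (le_trans (H x y)).
apply: (le_trans (ler_wpM2r _ (ler_norm l))) => //.
have l1 : 0 < `|l| + 1 by rewrite ltr_pwDr.
have h1 : `|l| * `|x - y| <= `|l| * (e / (`|l| + 1)).
  by rewrite ler_wpM2l // ltW.
apply: (le_trans h1); rewrite mulrA ler_pdivrMr //.
have := normr_ge0 l; nra.
Qed.

Definition clamp {R : realType} (a b x : R) := Num.max a (Num.min x b).

Lemma clamp_in {R : realType} (a b x : R) : a <= b -> a <= clamp a b x <= b.
Proof.
move=> ab; rewrite /clamp; apply/andP; split; first by rewrite le_max lexx.
by rewrite ge_max ab ge_min lexx orbT.
Qed.

Lemma clamp_id {R : realType} (a b x : R) : a <= x <= b -> clamp a b x = x.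
Proof.
move=> /andP[ax xb]; rewrite /clamp.
by rewrite (min_idPl xb) (max_idPr ax).
Qed.

Lemma clamp_mono {R : realType} (a b x y : R) : x <= y ->
  clamp a b x <= clamp a b y /\ clamp a b y - clamp a b x <= y - x.
Proof.
move=> xy; rewrite /clamp.
case: (leP x b) => xb; case: (leP y b) => yb; try lra.
- case: (leP a x) => ax; case: (leP a y) => ay; split; lra.
- case: (leP a x) => ax; case: (leP a b) => ay; split; lra.
Qed.

Lemma clamp_lip {R : realType} (a b x y : R) :
  `|clamp a b x - clamp a b y| <= `|x - y|.
Proof.
case: (leP x y) => xy.
- have [h1 h2] := clamp_mono a b x y xy.
  rewrite distrC ger0_norm; last by rewrite subr_ge0.
  rewrite distrC ger0_norm; last by rewrite subr_ge0.
  lra.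
- have [h1 h2] := clamp_mono a b y x (ltW xy).
  rewrite ger0_norm; last by rewrite subr_ge0.
  rewrite ger0_norm; last by rewrite subr_ge0 ltW.
  lra.
Qed.

Lemma lip1_integrable {R : realType} (a b : R) (g : R -> R) (l : R) :
  a <= b -> lip1 a b g l ->
  (@lebesgue_measure R).-integrable `[a, b] (EFin \o g).
Proof.
move=> ab H.
pose g' := fun x => g (clamp a b x).
have cg : continuous g'.
  apply: (@lip_cont _ g' `|l|) => s t.
  apply: (le_trans (H _ _ (clamp_in a b s ab) (clamp_in a b t ab))).
  apply: (le_trans (ler_wpM2r _ (ler_norm l))) => //.
  by rewrite ler_wpM2l // clamp_lip.
have ig : (@lebesgue_measure R).-integrable `[a, b] (EFin \o g').
  apply: continuous_compact_integrable; first exact: segment_compact.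
  exact: continuous_subspaceT.
apply: eq_integrable ig => //= x; rewrite inE /= in_itv /= => xab.
by rewrite /g' clamp_id.
Qed.

Lemma lip1_sub {R : realType} (a b a' b' : R) g l :
  lip1 a b g l -> a <= a' -> b' <= b -> lip1 a' b' g l.
Proof.
move=> H aa bb s t /andP[s1 s2] /andP[t1 t2]; apply: H.
- by rewrite (le_trans aa s1) (le_trans s2 bb).
- by rewrite (le_trans aa t1) (le_trans t2 bb).
Qed.

Lemma mu_itv {R : realType} (x y : R) : x <= y ->
  fine ((@lebesgue_measure R) `[x, y]) = y - x.
Proof.
move=> xy; rewrite lebesgue_measure_itv /=.
rewrite lte_fin; case: ltP => //= yx.
lra.
Qed.

Lemma Rint_split2 {R : realType} (a x b : R) g l :
  a <= x -> x <= b -> lip1 a b g l ->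
  \int[@lebesgue_measure R]_(t in `[a, b]) g t -
  \int[@lebesgue_measure R]_(t in `[a, x]) g t =
  \int[@lebesgue_measure R]_(t in `[x, b]) g t.
Proof.
move=> ax xb H.
have ig := lip1_integrable _ _ _ _ (le_trans ax xb) H.
rewrite Rintegral_itvB //; try by rewrite bnd_simp.
rewrite Rintegral_itv_obnd_cbnd //.
apply: integrableS ig => //.
by apply: subset_itvr; rewrite bnd_simp.
Qed.

Lemma Rint_cells {R : realType} (N : nat) (h : R) g l :
  0 <= h -> lip1 0 (N%:R * h) g l ->
  \int[@lebesgue_measure R]_(t in `[0, N%:R * h]) g t =
  \sum_(j < N) \int[@lebesgue_measure R]_(t in `[j%:R * h, j.+1%:R * h]) g t.
Proof.
move=> h0 H.
pose Phi (n : nat) := \int[@lebesgue_measure R]_(t in `[0, n%:R * h]) g t.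
have cell : forall j : 'I_N,
    \int[@lebesgue_measure R]_(t in `[j%:R * h, j.+1%:R * h]) g t = Phi j.+1 - Phi j.
  move=> j; rewrite /Phi; symmetry; apply: (@Rint_split2 R 0 (j%:R * h) (j.+1%:R * h) g l).
  - by rewrite mulr_ge0.
  - by rewrite ler_wpM2r // ler_nat.
  - apply: (lip1_sub _ _ _ _ _ _ H) => //; rewrite ler_wpM2r // ler_nat; exact: ltn_ord.
rewrite (eq_bigr _ (fun j _ => cell j)).
rewrite -(big_mkord xpredT (fun j => Phi j.+1 - Phi j)) telescope_sumr //.
rewrite /Phi mul0r set_itv1 Rintegral_set1 subr0 //.
Qed.

Lemma lip1_cB {R : realType} (a b c : R) g l :
  lip1 a b g l -> lip1 a b (fun s => c - g s) l.
Proof.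
by move=> H s t hs ht; rewrite opprB addrC addrA subrK distrC H.
Qed.

Lemma lip1_norm {R : realType} (a b : R) g l :
  lip1 a b g l -> lip1 a b (fun s => `|g s|) l.
Proof.
by move=> H s t hs ht; apply: le_trans (H s t hs ht); apply: ler_dist_dist.
Qed.

Lemma lip1_cst {R : realType} (a b c : R) : lip1 a b (fun _ => c) 0.
Proof. by move=> s t _ _; rewrite subrr normr0 mul0r. Qed.

Lemma approx1 {R : realType} (N : nat) (h : R) (a : 'I_N -> R) g eta lg le :
  0 <= h -> lip1 0 (N%:R * h) g lg -> lip1 0 (N%:R * h) eta le ->
  (forall (j : 'I_N) s, j%:R * h <= s <= j.+1%:R * h -> `|a j - g s| <= eta s) ->
  `|h * \sum_(j < N) a j - \int[@lebesgue_measure R]_(t in `[0, N%:R * h]) g t|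
    <= \int[@lebesgue_measure R]_(t in `[0, N%:R * h]) eta t.
Proof.
move=> h0 Hg He Ha.
rewrite (Rint_cells _ _ _ _ h0 Hg) (Rint_cells _ _ _ _ h0 He) mulr_sumr -sumrB.
apply: (le_trans (ler_norm_sum _ _ _)); apply: ler_sum => j _.
have c12 : j%:R * h <= j.+1%:R * h by rewrite ler_wpM2r // ler_nat.
have c0 : 0 <= j%:R * h by rewrite mulr_ge0.
have cN : j.+1%:R * h <= N%:R * h by rewrite ler_wpM2r // ler_nat; exact: ltn_ord.
have Hg' := lip1_sub _ _ _ _ _ _ Hg c0 cN.
have He' := lip1_sub _ _ _ _ _ _ He c0 cN.
have ha : h * a j = \int[@lebesgue_measure R]_(t in `[j%:R * h, j.+1%:R * h]) a j.
  by rewrite Rintegral_cst // mu_itv // -mulrBl -natrB // subSnn mul1r mulrC.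
rewrite ha -RintegralB //; last first.
- exact: lip1_integrable c12 Hg'.
- exact: lip1_integrable c12 (lip1_cst _ _ _).
apply: (le_trans (le_normr_Rintegral _ _)) => //.
  exact: lip1_integrable c12 (lip1_cB _ _ _ _ _ Hg').
apply: le_Rintegral => //.
- exact: lip1_integrable c12 (lip1_norm _ _ _ _ (lip1_cB _ _ _ _ _ Hg')).
- exact: lip1_integrable c12 He'.
- by move=> s /=; rewrite in_itv /= => hs; apply: Ha.
Qed.


Definition sq {R : realType} (d : nat) (x : 'rV[R]_d) := \sum_(i < d) (x ord0 i) ^+ 2.

Definition rc {R : realType} (d : nat) (s : R) (v : 'rV[R]_d) : 'rV[R]_(d.+1) :=
  row_mx (const_mx s : 'rV[R]_1) v.
Arguments rc {R d}.
Arguments sq {R d}.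

Lemma sq_rc {R : realType} d (s : R) (v : 'rV[R]_d) : sq (rc s v) = s ^+ 2 + sq v.
Proof.
rewrite /sq /rc.
rewrite (@big_split_ord _ _ _ 1 d xpredT (fun i : 'I_(1 + d) => (row_mx (const_mx s : 'rV[R]_1) v ord0 i) ^+ 2)) /=.
rewrite big_ord1; congr (_ + _).
  by rewrite row_mxEl mxE.
by apply: eq_bigr => i _; rewrite row_mxEr.
Qed.

Lemma rcB {R : realType} d (s t : R) (v w : 'rV[R]_d) : rc s v - rc t w = rc (s - t) (v - w).
Proof.
apply/rowP => i; rewrite !mxE /rc.
by case: (@fintype.split 1 d i) => j; rewrite !mxE.
Qed.

Lemma eucl_sq {R : realType} d (x : 'rV[R]_d) : eucl d x = Num.sqrt (sq x).
Proof. by []. Qed.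

Lemma eucl_rc_same {R : realType} d (s : R) (v w : 'rV[R]_d) :
  eucl d.+1 (rc s v - rc s w) = eucl d (v - w).
Proof. by rewrite !eucl_sq rcB sq_rc subrr expr0n /= add0r. Qed.

Lemma sq_ge0 {R : realType} d (x : 'rV[R]_d) : 0 <= sq x.
Proof. by apply: sumr_ge0 => i _; apply: sqr_ge0. Qed.

Lemma sq0 {R : realType} d : sq (0 : 'rV[R]_d) = 0.
Proof. by rewrite /sq big1 // => i _; rewrite mxE expr0n. Qed.

Lemma eucl_rc_pt {R : realType} d (s t : R) (v : 'rV[R]_d) :
  eucl d.+1 (rc s v - rc t v) = `|s - t|.
Proof. by rewrite !eucl_sq rcB sq_rc subrr sq0 addr0 sqrtr_sqr. Qed.

Lemma rc0 {R : realType} d (s : R) (v : 'rV[R]_d) : rc s v ord0 ord0 = s.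
Proof.
rewrite /rc mxE; case: (@splitP 1 d ord0) => j /= Hj; first by rewrite mxE.
by [].
Qed.

Lemma rcS {R : realType} d (s : R) (v : 'rV[R]_d) (j : 'I_d) :
  rc s v ord0 (lift ord0 j) = v ord0 j.
Proof.
rewrite /rc mxE; case: (@splitP 1 d (lift ord0 j)) => k /= Hk.
  by move: (ltn_ord k); rewrite -Hk.
by congr (v _ _); apply: val_inj => /=; move: Hk; rewrite /bump /= add1n => -[].
Qed.

Lemma cube_rc {R : realType} d (L s : R) (v : 'rV[R]_d) :
  cube d.+1 L (rc s v) <-> (0 <= s <= L /\ cube d L v).
Proof.
split.
- move=> H; split; first by have := H ord0; rewrite rc0.
  by move=> i; have := H (lift ord0 i); rewrite rcS.
- move=> [hs hv] i.
  case: (unliftP ord0 i) => [j ->|->]; first by rewrite rcS.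
  by rewrite rc0.
Qed.

Lemma slice_lip {R : realType} d (L s l : R) (F : 'rV[R]_d.+1 -> R) :
  lipschitz_cube d.+1 L F l -> 0 <= s <= L ->
  lipschitz_cube d L (fun v => F (rc s v)) l.
Proof.
move=> H hs x y hx hy.
have := H (rc s x) (rc s y); rewrite eucl_rc_same; apply; exact/cube_rc.
Qed.

Lemma pt_lip {R : realType} d (L l : R) (F : 'rV[R]_d.+1 -> R) (v : 'rV[R]_d) :
  lipschitz_cube d.+1 L F l -> cube d L v -> lip1 0 L (fun s => F (rc s v)) l.
Proof.
move=> H hv s t hs ht.
have := H (rc s v) (rc t v); rewrite eucl_rc_pt; apply; exact/cube_rc.
Qed.

Lemma lc_lip {R : realType} d (L a b lF lG : R) (F G : 'rV[R]_d -> R) :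
  lipschitz_cube d L F lF -> lipschitz_cube d L G lG ->
  lipschitz_cube d L (fun x => a * F x + b * G x) (`|a| * lF + `|b| * lG).
Proof.
move=> HF HG x y hx hy.
have -> : a * F x + b * G x - (a * F y + b * G y) = a * (F x - F y) + b * (G x - G y).
  by ring.
apply: (le_trans (ler_normD _ _)); rewrite mulrDl !normrM -!mulrA.
by apply: lerD; apply: ler_wpM2l => //; [apply: HF | apply: HG].
Qed.

Lemma cst_lip {R : realType} d (L c : R) : lipschitz_cube d L (fun _ => c) 0.
Proof. by move=> x y _ _; rewrite subrr normr0 mul0r. Qed.

Lemma lip1_scale {R : realType} (a b c : R) g l :
  lip1 a b g l -> lip1 a b (fun s => c * g s) (`|c| * l).
Proof.
by move=> H s t hs ht; rewrite -mulrBr normrM -mulrA ler_wpM2l // H.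
Qed.

Lemma cube_int_ext {R : realType} (L : R) d (F G : 'rV[R]_d -> R) :
  (forall x, cube d L x -> F x = G x) -> cube_int L d F = cube_int L d G.
Proof.
elim: d F G => [|d IH] F G H /=.
  by apply: H => -[].
apply: eq_Rintegral => s; rewrite inE /= in_itv /= => hs.
apply: IH => v hv; apply: H; exact/cube_rc.
Qed.

Lemma cube_int_cst {R : realType} (L : R) d (c : R) : 0 <= L ->
  cube_int L d (fun _ => c) = c * L ^+ d.
Proof.
move=> L0; elim: d c => [|d IH] c /=; first by rewrite expr0 mulr1.
under eq_Rintegral do rewrite IH.
by rewrite Rintegral_cst // mu_itv // subr0 exprSr mulrA.
Qed.

Definition PLin {R : realType} (L : R) d :=
  (forall (F G : 'rV[R]_d -> R) a b lF lG,
    lipschitz_cube d L F lF -> lipschitz_cube d L G lG ->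
    cube_int L d (fun x => a * F x + b * G x) = a * cube_int L d F + b * cube_int L d G) /\
  (forall (F G : 'rV[R]_d -> R) lF lG,
    lipschitz_cube d L F lF -> lipschitz_cube d L G lG ->
    (forall x, cube d L x -> F x <= G x) -> cube_int L d F <= cube_int L d G).

Lemma int_lip {R : realType} (L : R) d (F : 'rV[R]_d.+1 -> R) l :
  0 <= L -> 0 <= l -> PLin L d -> lipschitz_cube d.+1 L F l ->
  lip1 0 L (fun s => cube_int L d (fun v => F (rc s v))) (l * L ^+ d).
Proof.
move=> L0 l0 [Hlin Hmono] HF s t hs ht.
have Hs := slice_lip _ _ _ _ _ HF hs.
have Ht := slice_lip _ _ _ _ _ HF ht.
have -> : cube_int L d (fun v => F (rc s v)) - cube_int L d (fun v => F (rc t v)) =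
    cube_int L d (fun v => 1 * F (rc s v) + (-1) * F (rc t v)).
  by rewrite (Hlin _ _ _ _ _ _ Hs Ht) mul1r mulN1r.
have HD := lc_lip _ _ 1 (-1) _ _ _ _ Hs Ht.
have bnd : forall v, cube d L v -> `|1 * F (rc s v) + (-1) * F (rc t v)| <= l * `|s - t|.
  move=> v hv; rewrite mul1r mulN1r; exact: (pt_lip _ _ _ _ _ HF hv).
rewrite ler_norml; apply/andP; split.
- have -> : - (l * L ^+ d * `|s - t|) = cube_int L d (fun _ => - (l * `|s - t|)).
    by rewrite cube_int_cst //; ring.
  apply: (Hmono _ _ _ _ (cst_lip _ _ _) HD) => v hv.
  by have := bnd v hv; rewrite ler_norml => /andP[].
- have -> : l * L ^+ d * `|s - t| = cube_int L d (fun _ => l * `|s - t|).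
    by rewrite cube_int_cst //; ring.
  apply: (Hmono _ _ _ _ HD (cst_lip _ _ _)) => v hv.
  by have := bnd v hv; rewrite ler_norml => /andP[].
Qed.

Lemma plin_all {R : realType} (L : R) d : 0 <= L -> PLin L d.
Proof.
move=> L0; elim: d => [|d IH].
  split; first by move=> F G a b lF lG _ _ /=.
  by move=> F G lF lG _ _ H /=; apply: H => -[].
have [Hlin Hmono] := IH.
have wl : forall F lF, lipschitz_cube d.+1 L F lF ->
    lipschitz_cube d.+1 L F `|lF|.
  move=> F lF H x y hx hy; apply: (le_trans (H x y hx hy)).
  by apply: ler_wpM2r; [rewrite sqrtr_ge0 | apply: ler_norm].
have ig : forall F lF, lipschitz_cube d.+1 L F lF ->
    (@lebesgue_measure R).-integrable `[0, L]
      (EFin \o (fun s => cube_int L d (fun v => F (rc s v)))).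
  move=> F lF H; apply: (lip1_integrable _ _ _ _ L0).
  by apply: (int_lip _ _ _ _ L0 _ IH (wl _ _ H)).
split.
- move=> F G a b lF lG HF HG /=.
  rewrite -(RintegralZl _ _ (ig _ _ HF)) // -(RintegralZl _ _ (ig _ _ HG)) //.
  rewrite -RintegralD //; last first.
  + apply: (lip1_integrable _ _ _ _ L0); apply: lip1_scale.
    exact: (int_lip _ _ _ _ L0 _ IH (wl _ _ HG)).
  + apply: (lip1_integrable _ _ _ _ L0); apply: lip1_scale.
    exact: (int_lip _ _ _ _ L0 _ IH (wl _ _ HF)).
  apply: eq_Rintegral => s; rewrite inE /= in_itv /= => hs.
  exact: (Hlin _ _ _ _ _ _ (slice_lip _ _ _ _ _ HF hs) (slice_lip _ _ _ _ _ HG hs)).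
- move=> F G lF lG HF HG H /=.
  apply: le_Rintegral => //; [exact: ig HF | exact: ig HG |].
  move=> s; rewrite /= in_itv /= => hs.
  apply: (Hmono _ _ _ _ (slice_lip _ _ _ _ _ HF hs) (slice_lip _ _ _ _ _ HG hs)).
  by move=> v hv; apply: H; apply/cube_rc.
Qed.


Definition fcons (N d : nat) (j : 'I_N) (k : {ffun 'I_d -> 'I_N}) : {ffun 'I_d.+1 -> 'I_N} :=
  [ffun i => if unlift ord0 i is Some i' then k i' else j].

Definition ftail (N d : nat) (k : {ffun 'I_d.+1 -> 'I_N}) : {ffun 'I_d -> 'I_N} :=
  [ffun i => k (lift ord0 i)].

Lemma fcons0 N d j k : fcons N d j k ord0 = j.
Proof. by rewrite /fcons ffunE unlift_none. Qed.

Lemma fconsS N d j k i : fcons N d j k (lift ord0 i) = k i.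
Proof. by rewrite /fcons ffunE liftK. Qed.

Lemma sum_fcons {R : realType} N d (F : {ffun 'I_d.+1 -> 'I_N} -> R) :
  \sum_(k : {ffun 'I_d.+1 -> 'I_N}) F k =
  \sum_(j : 'I_N) \sum_(k : {ffun 'I_d -> 'I_N}) F (fcons N d j k).
Proof.
rewrite pair_big /=.
rewrite (reindex (fun p : 'I_N * {ffun 'I_d -> 'I_N} => fcons N d p.1 p.2)) /=.
  by apply: eq_bigr => -[j k] _.
exists (fun k : {ffun 'I_d.+1 -> 'I_N} => (k ord0, ftail N d k)) => [[j k] _ | k _] /=.
  congr pair; first exact: fcons0.
  by apply/ffunP => i; rewrite /ftail ffunE fconsS.
apply/ffunP => i; case: (unliftP ord0 i) => [i' ->|->].
  by rewrite fconsS /ftail ffunE.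
by rewrite fcons0.
Qed.

Lemma grid_fcons {R : realType} N d (L : R) j k :
  grid_pt d.+1 N L (fcons N d j k) = rc (L / N%:R * j%:R) (grid_pt d N L k).
Proof.
apply/rowP => i; rewrite mxE.
case: (unliftP ord0 i) => [i' ->|->].
  by rewrite fconsS rcS mxE.
by rewrite fcons0 rc0.
Qed.

Definition cell {R : realType} (N d : nat) (L : R) (k : {ffun 'I_d -> 'I_N}) (t : 'rV[R]_d) :=
  forall i, (k i)%:R * (L / N%:R) <= t ord0 i <= (k i).+1%:R * (L / N%:R).

Lemma approxd {R : realType} (L : R) (N : nat) d :
  0 < L -> (0 < N)%N ->
  forall (G1 G2 H : 'rV[R]_d -> R) l2 lH,
  0 <= l2 -> 0 <= lH ->
  lipschitz_cube d L G2 l2 -> lipschitz_cube d L H lH ->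
  (forall k t, cell N d L k t -> `|G1 (grid_pt d N L k) - G2 t| <= H t) ->
  `|(L / N%:R) ^+ d * gridsum d N L G1 - cube_int L d G2| <= cube_int L d H.
Proof.
move=> L0 N0; set h := L / N%:R.
have h0 : 0 <= h by rewrite /h divr_ge0 // ltW.
have LNh : L = N%:R * h.
  by rewrite /h mulrC -mulrA mulVf ?mulr1 // pnatr_eq0 -lt0n.
elim: d => [|d IH] G1 G2 H l2 lH l20 lH0 HG2 HH Hc.
  rewrite expr0 mul1r /gridsum /=.
  pose k0 := [ffun i : 'I_0 => (Ordinal N0 : 'I_N) ] .
  have -> : \sum_(k : {ffun 'I_0 -> 'I_N}) G1 (grid_pt 0 N L k) = G1 (grid_pt 0 N L k0).
    apply: (big_pred1 k0) => k /=; apply/esym/eqP/ffunP => -[i hi] //.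
  by apply: Hc => -[].
have PL := plin_all L d (ltW L0).
pose a := fun j : 'I_N => h ^+ d * gridsum d N L (fun v => G1 (rc (h * j%:R) v)).
have E : h ^+ d.+1 * gridsum d.+1 N L G1 = h * \sum_(j < N) a j.
  rewrite /a /gridsum sum_fcons -mulr_sumr exprSr.
  under eq_bigr do under eq_bigr do rewrite grid_fcons.
  rewrite /h; ring.
rewrite E /=.
have := @approx1 R N h a (fun s => cube_int L d (fun v => G2 (rc s v)))
   (fun s => cube_int L d (fun v => H (rc s v))) (l2 * L ^+ d) (lH * L ^+ d) h0.
rewrite -LNh; apply.
- exact: (int_lip _ _ _ _ (ltW L0) l20 PL HG2).
- exact: (int_lip _ _ _ _ (ltW L0) lH0 PL HH).
move=> j s hs.
have hsL : 0 <= s <= L.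
  move: hs => /andP[h1 h2]; apply/andP; split.
    by apply: le_trans h1; rewrite mulr_ge0.
  apply: (le_trans h2); rewrite LNh ler_wpM2r // ler_nat; exact: ltn_ord.
apply: (IH _ _ _ _ _ l20 lH0 (slice_lip _ _ _ _ _ HG2 hsL) (slice_lip _ _ _ _ _ HH hsL)).
move=> k t hkt.
have := Hc (fcons N d j k) (rc s t).
rewrite grid_fcons; apply.
move=> i; case: (unliftP ord0 i) => [i' ->|->].
  by rewrite fconsS rcS; apply: hkt.
by rewrite fcons0 rc0.
Qed.


Lemma eucl_le {R : realType} d (x : 'rV[R]_d) (c : R) : 0 <= c ->
  (forall i, `|x ord0 i| <= c) -> eucl d x <= Num.sqrt d%:R * c.
Proof.
move=> c0 H; rewrite /eucl -(ger0_norm c0) -sqrtr_sqr -sqrtrM ?ler0n //.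
rewrite ler_sqrt ?mulr_ge0 ?ler0n ?sqr_ge0 //.
have -> : (d%:R : R) = \sum_(i < d) (1 : R) by rewrite sumr_const card_ord.
rewrite mulr_suml.
apply: ler_sum => i _; rewrite mul1r.
have := H i; rewrite ler_norml => /andP[h1 h2]; nra.
Qed.

Lemma cell_dist {R : realType} N d (L : R) k t : 0 <= L ->
  cell N d L k t -> eucl d (grid_pt d N L k - t) <= Num.sqrt d%:R * (L / N%:R).
Proof.
move=> L0 H; apply: eucl_le; first by rewrite divr_ge0.
move=> i; rewrite !mxE; have := H i; rewrite -natr1 mulrDl mul1r => /andP[h1 h2].
rewrite mulrC ler_norml; apply/andP; split; lra.
Qed.

Lemma cell_cube {R : realType} N d (L : R) k t : 0 < L -> (0 < N)%N ->
  cell N d L k t -> cube d L t.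
Proof.
move=> L0 N0 H i; have := H i => /andP[h1 h2]; apply/andP; split.
  by apply: le_trans h1; rewrite mulr_ge0 // divr_ge0 // ltW.
apply: (le_trans h2); rewrite mulrA ler_pdivrMr ?ltr0n //. rewrite mulrC ler_pM2l //.
by rewrite ler_nat; apply: ltn_ord.
Qed.

Lemma grid_cube {R : realType} N d (L : R) k : 0 < L -> (0 < N)%N ->
  cube d L (grid_pt d N L k).
Proof.
move=> L0 N0; apply: (cell_cube N d L k _ L0 N0) => i; rewrite mxE.
apply/andP; split; first by rewrite mulrC.
by rewrite mulrC ler_wpM2r ?divr_ge0 ?ltW ?ltr0n ?ltr_nat.
Qed.

Lemma lip_nonneg {R : realType} d (L : R) F l : (1 <= d)%N -> 0 < L ->
  lipschitz_cube d L F l -> 0 <= l.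
Proof.
move=> d1 L0 H; rewrite leNgt; apply/negP => l0.
have c0 : cube d L 0 by move=> i; rewrite mxE lexx ltW.
have cL : cube d L (const_mx L) by move=> i; rewrite mxE lexx ltW.
have := H 0 (const_mx L) c0 cL.
have ep : 0 < eucl d (0 - const_mx L).
  rewrite /eucl sqrtr_gt0; case: d d1 F H c0 cL => // d _ _ _ _ _.
  rewrite big_ord_recl; apply: ltr_pwDl; last first.
    by apply: sumr_ge0 => i _; apply: sqr_ge0.
  by rewrite !mxE sub0r sqrrN exprn_gt0.
have := normr_ge0 (F 0 - F (const_mx L)); nra.
Qed.

Lemma prod_lip {R : realType} d (L K P lphi lp : R) (phi p : 'rV[R]_d -> R) :
  0 <= K -> 0 <= P ->
  (forall x, cube d L x -> `|phi x| <= K) -> (forall x, cube d L x -> `|p x| <= P) ->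
  lipschitz_cube d L phi lphi -> lipschitz_cube d L p lp ->
  lipschitz_cube d L (fun x => phi x * p x) (K * lp + P * lphi).
Proof.
move=> K0 P0 Hphi Hp Lphi Lp x y hx hy.
have -> : phi x * p x - phi y * p y = phi x * (p x - p y) + (phi x - phi y) * p y by ring.
apply: (le_trans (ler_normD _ _)); rewrite !normrM mulrDl.
apply: lerD.
- rewrite -mulrA; apply: ler_pM => //; [exact: Hphi | exact: Lp].
- rewrite mulrC -mulrA; apply: ler_pM => //; [exact: Hp | exact: Lphi].
Qed.

Lemma p_bound {R : realType} d (L lp : R) (p : 'rV[R]_d -> R) : 0 < L -> 0 <= lp ->
  lipschitz_cube d L p lp ->
  exists P, 0 <= P /\ forall x, cube d L x -> `|p x| <= P.
Proof.
move=> L0 lp0 H; exists (`|p 0| + lp * (Num.sqrt d%:R * L)); split.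
  by rewrite addr_ge0 // mulr_ge0 // mulr_ge0 // ltW.
have c0 : cube d L 0 by move=> i; rewrite mxE lexx ltW.
move=> x hx.
have -> : p x = p 0 + (p x - p 0) by ring.
apply: (le_trans (ler_normD _ _)); rewrite lerD2l.
apply: (le_trans (H x 0 hx c0)); apply: ler_wpM2l => //.
apply: eucl_le; first exact: ltW.
move=> i; rewrite !mxE subr0; have := hx i => /andP[h1 h2].
by rewrite ger0_norm.
Qed.

Lemma supnorm_ge {R : realType} d (L : R) (f : 'rV[R]_d -> R) :
  (exists M, forall x, cube d L x -> `|f x| <= M) ->
  forall x, cube d L x -> `|f x| <= supnorm d L f.
Proof.
move=> [M HM] x hx; apply: ub_le_sup; last by exists x.
by exists M => _ [y hy <-]; apply: HM.
Qed.

Lemma sq_lip {R : realType} d (L M lf : R) (f : 'rV[R]_d -> R) :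
  0 <= M -> (forall x, cube d L x -> `|f x| <= M) ->
  lipschitz_cube d L f lf ->
  lipschitz_cube d L (fun x => f x ^+ 2) (2 * M * lf).
Proof.
move=> M0 HM H x y hx hy.
have -> : f x ^+ 2 - f y ^+ 2 = (f x + f y) * (f x - f y) by ring.
rewrite normrM -mulrA; apply: ler_pM => //.
apply: (le_trans (ler_normD _ _)); rewrite mulr2n mulrDl mul1r.
by apply: lerD; apply: HM.
exact: H.
Qed.


Lemma muerr {R : realType} d N (L lp lphi K : R) (p phi : 'rV[R]_d -> R) :
  (1 <= d)%N -> 0 < L -> (0 < N)%N -> is_density d L p ->
  lipschitz_cube d L p lp ->
  (exists k : {ffun 'I_d -> 'I_N}, 0 < p (grid_pt d N L k)) ->
  0 <= K -> (forall x, cube d L x -> `|phi x| <= K) ->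
  lipschitz_cube d L phi lphi ->
  `|cube_int L d (fun x => phi x * p x) -
    \sum_(k : {ffun 'I_d -> 'I_N}) phi (grid_pt d N L k) * pbar d N L p k|
    <= 2 * K * (lp * Num.sqrt d%:R * (L / N%:R) * L ^+ d) + lphi * Num.sqrt d%:R * (L / N%:R)
  /\ `|cube_int L d (fun x => phi x * p x)| <= K
  /\ `|\sum_(k : {ffun 'I_d -> 'I_N}) phi (grid_pt d N L k) * pbar d N L p k| <= K.
Proof.
move=> d1 L0 N0 [pge0 pint] Lp [k0 pk0] K0 Hphi Lphi.
set h := L / N%:R.
set sd := Num.sqrt d%:R.
have h0 : 0 <= h by rewrite /h divr_ge0 // ltW.
have sd0 : 0 <= sd by apply: sqrtr_ge0.
have lp0 := lip_nonneg _ _ _ _ d1 L0 Lp.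
have lphi0 := lip_nonneg _ _ _ _ d1 L0 Lphi.
have [P [P0 HP]] := p_bound _ _ _ _ L0 lp0 Lp.
have [Hlin Hmono] := plin_all L d (ltW L0).
have gc := fun k => grid_cube N d L k L0 N0.
set S := gridsum d N L p.
have S0 : 0 < S.
  rewrite /S /gridsum (bigD1 k0) //=; apply: (lt_le_trans pk0); rewrite lerDl.
  by apply: sumr_ge0 => k _; apply: pge0.
set D := \sum_(k : {ffun 'I_d -> 'I_N}) phi (grid_pt d N L k) * pbar d N L p k.
have DE : D = gridsum d N L (fun x => phi x * p x) / S.
  by rewrite /D /gridsum mulr_suml; apply: eq_bigr => k _; rewrite /pbar mulrA.
have HD : `|D| <= K.
  rewrite /D; apply: (le_trans (ler_norm_sum _ _ _)).
  apply: (@le_trans _ _ (\sum_(k : {ffun 'I_d -> 'I_N}) K * pbar d N L p k)).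
    apply: ler_sum => k _; rewrite normrM (ger0_norm (divr_ge0 (pge0 _ (gc k)) (ltW S0))).
    by apply: ler_wpM2r; [apply: divr_ge0; [apply: pge0 | apply: ltW] | apply: Hphi].
  rewrite -mulr_sumr /pbar -mulr_suml -/(gridsum d N L p) -/S divff ?mulr1 //.
  exact: lt0r_neq0.
have cd : forall k t, cell N d L k t -> eucl d (grid_pt d N L k - t) <= sd * h.
  by move=> k t; apply: cell_dist; apply: ltW.
have cc : forall k t, cell N d L k t -> cube d L t.
  by move=> k t; apply: cell_cube.
have E1 : `|h ^+ d * S - 1| <= lp * (sd * h) * L ^+ d.
  rewrite -pint -(cube_int_cst L d _ (ltW L0)).
  apply: (@approxd R L N d L0 N0 _ _ _ lp 0) => //; first exact: cst_lip.
  move=> k t hkt; apply: (le_trans (Lp _ _ (gc k) (cc _ _ hkt))).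
  by apply: ler_wpM2l => //; apply: cd hkt.
set B := cube_int L d (fun x => phi x * p x).
set A := h ^+ d * gridsum d N L (fun x => phi x * p x).
have Lpp := prod_lip _ _ _ _ _ _ _ _ K0 P0 Hphi HP Lphi Lp.
have E2 : `|A - B| <= K * lp * (sd * h) * L ^+ d + lphi * (sd * h).
  have -> : K * lp * (sd * h) * L ^+ d + lphi * (sd * h) =
      cube_int L d (fun t => 1 * (K * lp * (sd * h)) + (lphi * (sd * h)) * p t).
    rewrite (Hlin _ _ _ _ _ _ (cst_lip d L (K * lp * (sd * h))) Lp) pint.
    by rewrite cube_int_cst ?mul1r ?mulr1 // ltW.
  apply: (@approxd R L N d L0 N0 _ _ _ (K * lp + P * lphi)
     (`|1| * 0 + `|lphi * (sd * h)| * lp)) => //.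
  - by rewrite addr_ge0 // mulr_ge0.
  - by rewrite addr_ge0 // ?mulr0 // mulr_ge0.
  - exact: lc_lip (cst_lip _ _ _) Lp.
  move=> k t hkt; have ht := cc _ _ hkt; have hk := gc k.
  have -> : phi (grid_pt d N L k) * p (grid_pt d N L k) - phi t * p t =
    phi (grid_pt d N L k) * (p (grid_pt d N L k) - p t) +
    (phi (grid_pt d N L k) - phi t) * p t by ring.
  apply: (le_trans (ler_normD _ _)); rewrite mul1r !normrM (ger0_norm (pge0 _ ht)).
  apply: lerD.
  - rewrite -mulrA; apply: ler_pM => //; first exact: Hphi.
    apply: (le_trans (Lp _ _ hk ht)); apply: ler_wpM2l => //; exact: cd hkt.
  - apply: ler_wpM2r; first exact: pge0.
    apply: (le_trans (Lphi _ _ hk ht)); apply: ler_wpM2l => //; exact: cd hkt.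
have HB : `|B| <= K.
  have pK : cube_int L d (fun x => K * p x + 0 * p x) = K.
    by rewrite (Hlin _ _ _ _ _ _ Lp Lp) pint mulr1 mul0r addr0.
  have pK' : cube_int L d (fun x => (- K) * p x + 0 * p x) = - K.
    by rewrite (Hlin _ _ _ _ _ _ Lp Lp) pint mulr1 mul0r addr0.
  have Lc1 := lc_lip _ _ K 0 _ _ _ _ Lp Lp.
  have Lc2 := lc_lip _ _ (- K) 0 _ _ _ _ Lp Lp.
  rewrite ler_norml; apply/andP; split.
  - rewrite -[X in X <= _]pK'; apply: (Hmono _ _ _ _ Lc2 Lpp) => x hx.
    rewrite mul0r addr0 mulNr -mulrN.
    have := Hphi x hx; rewrite ler_norml => /andP[h1 h2].
    have := pge0 x hx; nra.
  - rewrite -[X in _ <= X]pK; apply: (Hmono _ _ _ _ Lpp Lc1) => x hx.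
    rewrite mul0r addr0.
    have := Hphi x hx; rewrite ler_norml => /andP[h1 h2].
    have := pge0 x hx; nra.
split; last by split.
have AD : A = D * (h ^+ d * S).
  rewrite /A DE; field; exact: lt0r_neq0.
have -> : B - D = (B - A) + D * (h ^+ d * S - 1).
  by rewrite AD; ring.
apply: (le_trans (ler_normD _ _)); rewrite normrM distrC.
have : `|D| * `|h ^+ d * S - 1| <= K * (lp * (sd * h) * L ^+ d).
  by apply: ler_pM.
move: E2; set a := `|A - B|; set b := `|D| * _.
move=> E2 E3.
have -> : 2 * K * (lp * sd * h * L ^+ d) + lphi * sd * h =
  (K * lp * (sd * h) * L ^+ d + lphi * (sd * h)) + K * (lp * (sd * h) * L ^+ d) by ring.
by apply: lerD.
Qed.


Theorem mainTheorem12 (R : realType) (d N : nat) (L lp lf : R)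
  (p f : 'rV[R]_d -> R) :
  (1 <= d)%N -> 0 < L -> (1 <= N)%N ->
  is_density d L p ->
  lipschitz_cube d L p lp ->
  (exists k : {ffun 'I_d -> 'I_N}, 0 < p (grid_pt d N L k)) ->
  (exists M : R, forall x, cube d L x -> `|f x| <= M) ->
  lipschitz_cube d L f lf ->
  `|mu_c d L f p - mu_d d N L f p|
     <= 2 * supnorm d L f * (lp * Num.sqrt d%:R * L ^+ d.+1 / N%:R)
        + lf * Num.sqrt d%:R * (L / N%:R)
  /\
  `|var_c d L f p - var_d d N L f p|
     <= 6 * supnorm d L f ^+ 2 * (lp * Num.sqrt d%:R * L ^+ d.+1 / N%:R)
        + 4 * supnorm d L f * lf * Num.sqrt d%:R * (L / N%:R).
Proof.
move=> d1 L0 N0 dens Lp pos bnd Lf.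
set M := supnorm d L f.
have HM := supnorm_ge _ _ _ bnd; rewrite -/M in HM.
have c0 : cube d L 0 by move=> i; rewrite mxE lexx ltW.
have M0 : 0 <= M by apply: le_trans (HM _ c0).
have lf0 := lip_nonneg _ _ _ _ d1 L0 Lf.
have lp0 := lip_nonneg _ _ _ _ d1 L0 Lp.
have [e1 [b1 b2]] := @muerr R d N L lp lf M p f d1 L0 N0 dens Lp pos M0 HM Lf.
have HM2 : forall x, cube d L x -> `|f x ^+ 2| <= M ^+ 2.
  move=> x hx; rewrite normrX; apply: lerXn2r; rewrite ?nnegrE ?normr_ge0 //.
  exact: HM.
have [e2 _] := @muerr R d N L lp (2 * M * lf) (M ^+ 2) p (fun x => f x ^+ 2) d1 L0 N0 dens Lp pos (sqr_ge0 M) HM2 (sq_lip _ _ _ _ _ M0 HM Lf).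
set sd := Num.sqrt d%:R.
set h := L / N%:R.
have sd0 : 0 <= sd by apply: sqrtr_ge0.
have h0 : 0 <= h by rewrite /h divr_ge0 // ltW.
have EE : lp * sd * L ^+ d.+1 / N%:R = lp * sd * h * L ^+ d.
  by rewrite /h exprSr; ring.
rewrite EE.
rewrite /mu_c /mu_d in e1 b1 b2 *.
split; first exact: e1.
rewrite /var_c /var_d /m2_c /m2_d /mu_c /mu_d.
move: e1 b1 b2 e2.
set a := cube_int L d (fun x => f x * p x).
set b := \sum_(k : {ffun 'I_d -> 'I_N}) f (grid_pt d N L k) * pbar d N L p k.
set a2 := cube_int L d (fun x => f x ^+ 2 * p x).
set b2 := \sum_(k : {ffun 'I_d -> 'I_N}) f (grid_pt d N L k) ^+ 2 * pbar d N L p k.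
move=> e1 b1 b2' e2.
have -> : a2 - a ^+ 2 - (b2 - b ^+ 2) = (a2 - b2) - (a - b) * (a + b) by ring.
apply: (le_trans (ler_normB _ _)); rewrite normrM.
have e3 : `|a - b| * `|a + b| <= (2 * M * (lp * sd * h * L ^+ d) + lf * sd * h) * (2 * M).
  apply: ler_pM => //; apply: (le_trans (ler_normD _ _)).
  by rewrite mulr2n mulrDl mul1r lerD.
have := lerD e2 e3; move/le_trans; apply.
rewrite -/sd -/h le_eqVlt; apply/orP; left; apply/eqP; ring.
Qed.
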